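(* Let $g>0$, $p_0<p_1<0$, $[\![\rho]\!]<0$, $\Gamma_{\mathrm{rel}}>0$, and let $Q(\lambda)=\dfrac{2g[\![\rho]\!](p_1-p_0)}{\lambda}+\Gamma_{\mathrm{rel}}^2-\lambda^2$ for $\lambda>0$. For each integer $n\ge1$ such that $$\frac{g[\![\rho]\!]}{n}-\Gamma_{\mathrm{rel}}^2\coth\Big(\frac{np_1}{\Gamma_{\mathrm{rel}}}\Big)<0,$$ $Q$ is an invertible function of $\lambda$ in a neighborhood of $\lambda_n^*$, where $\lambda_n^*>0$ is the unique solution of $\frac{g[\![\rho]\!]}{n}=\Gamma_{\mathrm{rel}}^2\coth(\frac{np_1}{\Gamma_{\mathrm{rel}}})-\lambda^2\coth(\frac{n(p_1-p_0)}{\lambda})$.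
   Context: $[\![\rho]\!]=\rho_{\mathrm{air}}-\rho_{\mathrm{water}}<0$ is the density jump across the air–water interface, $g$ the gravitational constant; $Q(\lambda)$ is the Bernoulli-type constant of the laminar irrotational two-layer flow with water-region parameter $\lambda$ and air relative circulation $\Gamma_{\mathrm{rel}}$. *)

(* Defs.v *)
From Stdlib Require Import Reals.
Open Scope R_scope.

Definition coth (x : R) : R := cosh x / sinh x.

(* Q(lambda) = 2 g [[rho]] (p1 - p0) / lambda + Gamma_rel^2 - lambda^2,
   meaningful for lambda > 0; rho stands for the density jump [[rho]]. *)
Definition Qfun (g rho p0 p1 Gam lam : R) : R :=
  2 * g * rho * (p1 - p0) / lam + Gam ^ 2 - lam ^ 2.

Definition lam_star_eq (g rho p0 p1 Gam : R) (n : nat) (lam : R) : Prop :=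
  g * rho / INR n =
  Gam ^ 2 * coth (INR n * p1 / Gam) - lam ^ 2 * coth (INR n * (p1 - p0) / lam).

(* Main.v *)
Require Import Defs.
From Coquelicot Require Import Coquelicot.
From Stdlib Require Import Reals Lra Psatz Lia.
Open Scope R_scope.
Lemma cothE t : t <> 0 -> coth t = (exp (2*t) + 1)/(exp (2*t) - 1).
Proof.
  intros Ht. unfold coth, cosh, sinh.
  replace (2*t) with (t+t) by ring. rewrite exp_plus, exp_Ropp.
  assert (He : exp t > 0) by apply exp_pos.
  assert (H1 : exp t <> 1).
  { intro E. apply Ht. apply exp_inv. rewrite exp_0. exact E. }
  assert (H2 : exp t * exp t - 1 <> 0).
  { intro E. assert ((exp t - 1) * (exp t + 1) = 0) by (rewrite <- E; ring).
    apply Rmult_integral in H. destruct H; lra. }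
  assert (H3 : exp t - / exp t <> 0).
  { intro E. apply H2. replace (exp t * exp t - 1) with (exp t * (exp t - / exp t)) by (field; lra).
    rewrite E. ring. }
  field. split; lra.
Qed.

Lemma tcosh_gt t : 0 < t -> sinh t < t * cosh t.
Proof.
  intros Ht.
  set (h := fun s => s * ((exp s + exp (- s)) / 2) - (exp s - exp (- s)) / 2).
  destruct (MVT_cor2 h (fun s => s * ((exp s - exp (-s))/2)) 0 t Ht) as [c [Hc1 Hc2]].
  { intros c _. apply is_derive_Reals. unfold h. auto_derive; auto. simpl. unfold Rdiv. ring_simplify. reflexivity. }
  unfold h in Hc1. rewrite Ropp_0, exp_0 in Hc1.
  assert (exp (-c) < exp c) by (apply exp_increasing; lra).
  unfold sinh, cosh.
  assert (0 < c * ((exp c - exp (- c)) / 2) * (t - 0)).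
  { apply Rmult_lt_0_compat; [apply Rmult_lt_0_compat|]; lra. }
  lra.
Qed.

Definition phi d x := x^2 * ((exp (2*(d/x)) + 1)/(exp (2*(d/x)) - 1)).

Lemma ratio_lt u v : 1 < v -> v < u -> (u+1)/(u-1) < (v+1)/(v-1).
Proof.
  intros. replace ((u+1)/(u-1)) with (1 + 2 * / (u-1)) by (field; lra).
  replace ((v+1)/(v-1)) with (1 + 2 * / (v-1)) by (field; lra).
  assert (/ (u-1) < / (v-1)) by (apply Rinv_lt_contravar; nra). lra.
Qed.

Lemma exp_gt1 d x : 0 < d -> 0 < x -> 1 < exp (2*(d/x)).
Proof.
  intros. rewrite <- exp_0. apply exp_increasing.
  assert (0 < d/x) by (apply Rdiv_lt_0_compat; lra). lra.
Qed.

Lemma ratio_gt1 u : 1 < u -> 1 < (u+1)/(u-1).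
Proof. intros. apply (Rmult_lt_reg_r (u-1)). lra. field_simplify; lra. Qed.

Lemma phi_coth d x : 0 < d -> 0 < x -> phi d x = x^2 * coth (d/x).
Proof.
  intros. unfold phi. rewrite cothE; auto.
  assert (0 < d/x) by (apply Rdiv_lt_0_compat; lra). lra.
Qed.

Lemma phi_mono d x y : 0 < d -> 0 < x -> x < y -> phi d x < phi d y.
Proof.
  intros Hd Hx Hxy. unfold phi.
  assert (d / y < d / x).
  { unfold Rdiv. apply Rmult_lt_compat_l; auto. apply Rinv_lt_contravar; nra. }
  assert (exp (2*(d/y)) < exp (2*(d/x))) by (apply exp_increasing; lra).
  pose proof (exp_gt1 d y Hd ltac:(lra)).
  pose proof (exp_gt1 d x Hd Hx).
  pose proof (ratio_lt _ _ H1 H0).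
  pose proof (ratio_gt1 _ H2).
  apply Rle_lt_trans with (y^2 * ((exp (2 * (d / x)) + 1) / (exp (2 * (d / x)) - 1))).
  - apply Rmult_le_compat_r; nra.
  - apply Rmult_lt_compat_l; nra.
Qed.

Lemma phi_gt d x : 0 < d -> 0 < x -> x^2 < phi d x.
Proof.
  intros. unfold phi. pose proof (ratio_gt1 _ (exp_gt1 d x H H0)). set (r := (_ + 1) / (_ - 1)) in *. assert (0 < x^2) by (apply pow_lt; lra). nra.
Qed.

Lemma phi_lt d x : 0 < d -> 0 < x -> phi d x < x^2 + x^3/d.
Proof.
  intros Hd Hx. unfold phi.
  assert (Ht : 0 < 2*(d/x)) by (apply Rmult_lt_0_compat; [lra|apply Rdiv_lt_0_compat; lra]).
  pose proof (exp_ineq1 _ (Rgt_not_eq _ _ Ht)) as He.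
  set (u := exp (2*(d/x))) in *.
  replace ((u+1)/(u-1)) with (1 + 2 * / (u-1)) by (field; lra).
  assert (/ (u-1) < / (2*(d/x))) by (apply Rinv_lt_contravar; nra).
  assert (/ (2*(d/x)) = x / (2*d)) by (field; lra).
  assert (x^2 * (2 * /(u-1)) < x^3/d).
  { replace (x^3/d) with (x^2 * (2 * (x/(2*d)))) by (field; lra). 
    apply Rmult_lt_compat_l; nra. }
  lra.
Qed.

Lemma phi_gt3 d x : 0 < d -> 0 < x -> x^3/d < phi d x.
Proof.
  intros Hd Hx. rewrite phi_coth; auto.
  assert (Ht : 0 < d/x) by (apply Rdiv_lt_0_compat; lra).
  pose proof (tcosh_gt _ Ht).
  assert (0 < sinh (d/x)).
  { unfold sinh. assert (exp (- (d/x)) < exp (d/x)) by (apply exp_increasing; lra). lra. }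
  assert (x/d < coth (d/x)).
  { unfold coth. apply (Rmult_lt_reg_r (sinh (d/x))); auto.
    replace (cosh (d/x) / sinh (d/x) * sinh (d/x)) with (cosh (d/x)) by (field; lra).
    apply (Rmult_lt_reg_l (d/x)); auto.
    replace (d / x * (x / d * sinh (d / x))) with (sinh (d/x)) by (field; lra). lra. }
  replace (x^3/d) with (x^2 * (x/d)) by (field; lra).
  apply Rmult_lt_compat_l; nra.
Qed.

Lemma phi_cont d x : 0 < d -> 0 < x -> continuity_pt (phi d) x.
Proof.
  intros Hd Hx. apply derivable_continuous_pt. apply ex_derive_Reals_0.
  unfold phi. pose proof (exp_gt1 d x Hd Hx). auto_derive. repeat split; lra.
Qed.

Lemma inj_aux M L x y : 0 < M -> L^3 <= M -> 0 < x -> 0 < y -> x < L -> y < L ->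
  -2*M/x - x^2 = -2*M/y - y^2 -> x = y.
Proof.
  intros HM HL Hx Hy HxL HyL E.
  assert (E2 : (x - y) * (2*M - x*y*(x+y)) = 0).
  { apply (Rmult_eq_reg_l (/ (x*y))). 2: apply Rinv_neq_0_compat; nra.
    replace (/ (x*y) * ((x - y) * (2*M - x*y*(x+y)))) with
      ((-2*M/x - x^2) - (-2*M/y - y^2)) by (field; lra).
    rewrite E. field; lra. }
  assert (x*y < L*L) by (apply Rmult_le_0_lt_compat; lra).
  assert (x*y*(x+y) < L*L*(2*L)) by (apply Rmult_le_0_lt_compat; nra).
  apply Rmult_integral in E2. destruct E2 as [E2|E2]; [lra|]. 
  exfalso. simpl in HL. nra.
Qed.

Lemma cube_bound lam M : 0 < lam -> lam^3 < M ->
  let e := Rmin 1 ((M - lam^3)/(3*lam^2+3*lam+1)) in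
  0 < e /\ (lam + e)^3 <= M.
Proof.
  intros Hl HM e.
  assert (Hden : 0 < 3*lam^2+3*lam+1) by nra.
  assert (Hq : 0 < (M - lam^3)/(3*lam^2+3*lam+1)) by (apply Rdiv_lt_0_compat; lra).
  assert (He1 : e <= 1) by apply Rmin_l.
  assert (He2 : e <= (M - lam^3)/(3*lam^2+3*lam+1)) by apply Rmin_r.
  assert (He0 : 0 < e) by (unfold e; apply Rmin_glb_lt; lra).
  split; auto.
  assert (e * (3*lam^2+3*lam+1) <= M - lam^3).
  { apply (Rmult_le_compat_r (3*lam^2+3*lam+1)) in He2; [|lra].
    replace ((M - lam ^ 3) / (3 * lam ^ 2 + 3 * lam + 1) * (3 * lam ^ 2 + 3 * lam + 1))
      with (M - lam^3) in He2 by (field; lra). lra. }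
  assert (e*e <= e) by nra. assert (e*e*e <= e) by nra.
  assert (lam*e*e <= lam*e) by nra.
  replace ((lam+e)^3) with (lam^3 + 3*lam^2*e + 3*(lam*e*e) + e*e*e) by ring.
  nra.
Qed.

Theorem lemma3p4 (g rho p0 p1 Gam : R) (n : nat)
  (hg : 0 < g) (hp : p0 < p1) (hp1 : p1 < 0) (hrho : rho < 0) (hGam : 0 < Gam)
  (hn : (1 <= n)%nat)
  (hcond : g * rho / INR n - Gam ^ 2 * coth (INR n * p1 / Gam) < 0) :
  exists lam : R,
    (0 < lam /\ lam_star_eq g rho p0 p1 Gam n lam) /\
    (forall mu : R, 0 < mu -> lam_star_eq g rho p0 p1 Gam n mu -> mu = lam) /\
    exists eps : R, 0 < eps /\ eps <= lam /\
      forall x y : R, Rabs (x - lam) < eps -> Rabs (y - lam) < eps ->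
        Qfun g rho p0 p1 Gam x = Qfun g rho p0 p1 Gam y -> x = y.
Proof.
  assert (HN : 0 < INR n) by (apply lt_0_INR; lia).
  unfold lam_star_eq.
  set (N := INR n) in *.
  set (d := N * (p1 - p0)).
  assert (Hd : 0 < d) by (unfold d; apply Rmult_lt_0_compat; lra).
  set (c := N * p1 / Gam) in *.
  assert (Hc : c < 0).
  { unfold c, Rdiv. assert (0 < / Gam) by (apply Rinv_0_lt_compat; lra).
    assert (N * p1 < 0) by nra. nra. }
  assert (Hcoth : coth c < 0).
  { rewrite cothE by lra.
    assert (exp (2*c) < 1) by (rewrite <- exp_0; apply exp_increasing; lra).
    pose proof (exp_pos (2*c)).
    assert (/ (exp (2*c) - 1) < 0) by (apply Rinv_lt_0_compat; lra).
    unfold Rdiv. nra. }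
  set (A := Gam^2 * coth c) in *.
  assert (HA : A < 0) by (unfold A; assert (0 < Gam^2) by (apply pow_lt; lra); nra).
  set (K := A - g * rho / N).
  assert (HK : 0 < K) by (unfold K; lra).
  assert (Heq : forall mu, 0 < mu ->
     (g * rho / N = A - mu ^ 2 * coth (d / mu) <-> phi d mu = K)).
  { intros mu Hmu. rewrite phi_coth by lra. unfold K. split; intro; lra. }
  set (a := Rmin 1 (K / (2 * (1 + 1/d)))).
  assert (Hdd : 0 < 1 + 1/d) by (assert (0 < 1/d) by (apply Rdiv_lt_0_compat; lra); lra).
  assert (Ha0 : 0 < a) by (unfold a; apply Rmin_glb_lt; [lra| apply Rdiv_lt_0_compat; lra]).
  assert (Ha1 : a <= 1) by apply Rmin_l.
  assert (Ha2 : a <= K / (2 * (1 + 1/d))) by apply Rmin_r.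
  assert (Hfa : phi d a < K).
  { pose proof (phi_lt d a Hd Ha0).
    assert (a^2 <= a) by (simpl; nra). assert (a^3 <= a) by (simpl; nra).
    assert (a^3/d <= a/d) by (unfold Rdiv; apply Rmult_le_compat_r; [left; apply Rinv_0_lt_compat|]; lra).
    assert (a * (1 + 1/d) <= K/2).
    { apply (Rmult_le_compat_r (1 + 1/d)) in Ha2; [|lra].
      replace (K / (2 * (1 + 1 / d)) * (1 + 1 / d)) with (K/2) in Ha2 by (field; lra). lra. }
    replace (a/d) with (a * (1/d)) in * by (field; lra). nra. }
  set (b := K + 1).
  assert (Hfb : K < phi d b).
  { pose proof (phi_gt d b Hd ltac:(unfold b; lra)). unfold b in *. nra. }
  destruct (Ranalysis5.IVT_interv (fun x => phi d x - K) a b) as [lam [Hlam1 Hlam2]].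
  { intros z Hz. apply continuity_pt_minus. apply phi_cont; lra. apply continuity_pt_const.
    intros u v; reflexivity. }
  { unfold b; lra. } { simpl; lra. } { simpl; lra. }
  simpl in Hlam2.
  assert (Hl0 : 0 < lam) by lra.
  assert (Hphi : phi d lam = K) by lra.
  exists lam. split; [split; [lra| apply Heq; auto] |]. split.
  { intros mu Hmu E. apply Heq in E; auto.
    destruct (Rtotal_order mu lam) as [H|[H|H]]; auto.
    - pose proof (phi_mono d mu lam Hd Hmu H). lra.
    - pose proof (phi_mono d lam mu Hd Hl0 H). lra. }
  set (M := - (g * rho * (p1 - p0))).
  assert (HM : 0 < M) by (unfold M; assert (0 < - rho * g) by nra; nra).
  assert (Hl3 : lam^3 < M).
  { pose proof (phi_gt3 d lam Hd Hl0). rewrite Hphi in H.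
    assert (lam^3 < K * d).
    { apply (Rmult_lt_compat_r d) in H; auto.
      replace (lam^3/d*d) with (lam^3) in H by (field; lra). lra. }
    assert (K * d = N * (p1 - p0) * A - g*rho*(p1-p0)) by (unfold K, d; field; lra).
    assert (N * (p1 - p0) * A < 0).
    { assert (0 < N*(p1-p0)) by (fold d; lra). nra. }
    unfold M. lra. }
  destruct (cube_bound lam M Hl0 Hl3) as [He0 HeL].
  set (e := Rmin 1 ((M - lam^3)/(3*lam^2+3*lam+1))) in *.
  exists (Rmin lam e). split; [apply Rmin_glb_lt; lra|]. split; [apply Rmin_l|].
  intros x y Hx Hy EQ.
  assert (Hm1 : Rmin lam e <= lam) by apply Rmin_l.
  assert (Hm2 : Rmin lam e <= e) by apply Rmin_r.
  apply Rabs_def2 in Hx. apply Rabs_def2 in Hy.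
  apply (inj_aux M (lam + e) x y HM HeL); try lra.
  unfold Qfun in EQ.
  replace (2 * g * rho * (p1 - p0)) with (-2*M) in EQ by (unfold M; ring). lra.
Qed.
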